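(* For a matrix $A\in SL_2\mathcal{V}$, the following are equivalent: (1) $A\neq1$ and $(A-1)^2=0$; (2) $A$ is conjugate (in $SL_2\mathcal{V}$) to $P_0=\begin{pmatrix}1&1\\0&1\end{pmatrix}$; (3) $A=\begin{pmatrix}1-ac^*&aa^*\\-cc^*&1+ca^*\end{pmatrix}$ for some $(a,c)\in S\mathbb{H}$.
   Context: For $q=a+bi+cj+dk\in\mathbb{H}$, $q^*=a+bi+cj-dk$, $\bar q=a-bi-cj-dk$. $\mathcal{V}=\mathrm{span}_\mathbb{R}\{1,i,j\}$. $S\mathbb{H}=\{(\xi,\eta)\in\mathbb{H}^2\setminus\{(0,0)\}:\xi\bar\eta\in\mathcal{V}\}$. $SL_2\mathcal{V}$ is the group of quaternionic matrices $\begin{pmatrix}a&b\\c&d\end{pmatrix}$ with $ab^*,cd^*,c^*a,d^*b,ba^*,dc^*,a^*c,b^*d\in\mathcal{V}$ and $ad^*-bc^*=da^*-cb^*=d^*a-b^*c=a^*d-c^*b=1$. *)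

(* Defs.v *)
From HB Require Import structures.
From mathcomp Require Import all_boot all_order all_algebra.
From mathcomp Require Import reals.
Set Implicit Arguments. Unset Strict Implicit. Unset Printing Implicit Defensive.
Import Order.TTheory GRing.Theory Num.Theory.
Local Open Scope ring_scope.

Section Quat.
Variable R : realType.

(* q = a + b i + c j + d k *)
Record quat := Quat { qa : R; qb : R; qc : R; qd : R }.

Definition q0 : quat := Quat 0 0 0 0.
Definition q1 : quat := Quat 1 0 0 0.
Definition qadd (p q : quat) : quat :=
  Quat (qa p + qa q) (qb p + qb q) (qc p + qc q) (qd p + qd q).
Definition qopp (p : quat) : quat := Quat (- qa p) (- qb p) (- qc p) (- qd p).
Definition qsub (p q : quat) : quat := qadd p (qopp q).
(* Hamilton product, i^2 = j^2 = k^2 = ijk = -1 *)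
Definition qmul (p q : quat) : quat :=
  Quat (qa p * qa q - qb p * qb q - qc p * qc q - qd p * qd q)
       (qa p * qb q + qb p * qa q + qc p * qd q - qd p * qc q)
       (qa p * qc q - qb p * qd q + qc p * qa q + qd p * qb q)
       (qa p * qd q + qb p * qc q - qc p * qb q + qd p * qa q).
Definition qconj (q : quat) : quat := Quat (qa q) (- qb q) (- qc q) (- qd q).
Definition qstar (q : quat) : quat := Quat (qa q) (qb q) (qc q) (- qd q).

Definition inV (q : quat) : Prop := qd q = 0.

Definition inSH (xi eta : quat) : Prop :=
  ~ (xi = q0 /\ eta = q0) /\ inV (qmul xi (qconj eta)).

Record mat2 := Mat2 { m11 : quat; m12 : quat; m21 : quat; m22 : quat }.

Definition mone : mat2 := Mat2 q1 q0 q0 q1.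
Definition mzero : mat2 := Mat2 q0 q0 q0 q0.
Definition msub (A B : mat2) : mat2 :=
  Mat2 (qsub (m11 A) (m11 B)) (qsub (m12 A) (m12 B))
       (qsub (m21 A) (m21 B)) (qsub (m22 A) (m22 B)).
Definition mmul (A B : mat2) : mat2 :=
  Mat2 (qadd (qmul (m11 A) (m11 B)) (qmul (m12 A) (m21 B)))
       (qadd (qmul (m11 A) (m12 B)) (qmul (m12 A) (m22 B)))
       (qadd (qmul (m21 A) (m11 B)) (qmul (m22 A) (m21 B)))
       (qadd (qmul (m21 A) (m12 B)) (qmul (m22 A) (m22 B))).

Definition inSL2V (M : mat2) : Prop :=
  let a := m11 M in let b := m12 M in let c := m21 M in let d := m22 M in
  (inV (qmul a (qstar b)) /\ inV (qmul c (qstar d)) /\ inV (qmul (qstar c) a) /\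
   inV (qmul (qstar d) b) /\ inV (qmul b (qstar a)) /\ inV (qmul d (qstar c)) /\
   inV (qmul (qstar a) c) /\ inV (qmul (qstar b) d)) /\
  (qsub (qmul a (qstar d)) (qmul b (qstar c)) = q1 /\
   qsub (qmul d (qstar a)) (qmul c (qstar b)) = q1 /\
   qsub (qmul (qstar d) a) (qmul (qstar b) c) = q1 /\
   qsub (qmul (qstar a) d) (qmul (qstar c) b) = q1).

Definition P0 : mat2 := Mat2 q1 q1 q0 q1.

Definition conj_SL2V (A B : mat2) : Prop :=
  exists G Ginv : mat2, [/\ inSL2V G, mmul G Ginv = mone, mmul Ginv G = mone &
                          A = mmul (mmul G B) Ginv].

End Quat.

(* Main.v *)
Require Import Defs.
From mathcomp Require Import all_boot all_order all_algebra.
From mathcomp Require Import reals.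
From HB Require Import structures.
From mathcomp Require Import ring lra.
Local Open Scope ring_scope.

Module Helpers.
Set Implicit Arguments. Unset Strict Implicit. Unset Printing Implicit Defensive.
Import Order.TTheory GRing.Theory Num.Theory.
Section SL1.
Variable R : realType.
Implicit Types p q r a c x y z : quat R.

Lemma quatE p q : qa p = qa q -> qb p = qb q -> qc p = qc q -> qd p = qd q -> p = q.
Proof. by case: p => ????; case: q => ???? /= -> -> -> ->. Qed.

Ltac qring := apply: quatE => /=; ring.

Lemma qmulA p q r : qmul p (qmul q r) = qmul (qmul p q) r.
Proof. qring. Qed.
Lemma qstar_mul p q : qstar (qmul p q) = qmul (qstar q) (qstar p).
Proof. qring. Qed.
Lemma qstarK p : qstar (qstar p) = p.
Proof. qring. Qed.
Lemma qmul1l p : qmul (q1 R) p = p.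
Proof. qring. Qed.
Lemma qmul1r p : qmul p (q1 R) = p.
Proof. qring. Qed.
Lemma qmulNl p q : qmul (qopp p) q = qopp (qmul p q).
Proof. qring. Qed.
Lemma qmulNr p q : qmul p (qopp q) = qopp (qmul p q).
Proof. qring. Qed.
Lemma qstarN p : qstar (qopp p) = qopp (qstar p).
Proof. qring. Qed.
Lemma qoppK p : qopp (qopp p) = p.
Proof. qring. Qed.

Definition qnorm p := qa p ^+ 2 + qb p ^+ 2 + qc p ^+ 2 + qd p ^+ 2.
Lemma qnorm_eq0 p : qnorm p = 0 -> p = q0 R.
Proof.
rewrite /qnorm => h.
have H := (sqr_ge0 (qa p), sqr_ge0 (qb p), sqr_ge0 (qc p), sqr_ge0 (qd p)).
case: H => [[[H1 H2] H3] H4].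
have ha : qa p = 0 by apply/eqP; rewrite -sqrf_eq0; apply/eqP; lra.
have hb : qb p = 0 by apply/eqP; rewrite -sqrf_eq0; apply/eqP; lra.
have hc : qc p = 0 by apply/eqP; rewrite -sqrf_eq0; apply/eqP; lra.
have hd : qd p = 0 by apply/eqP; rewrite -sqrf_eq0; apply/eqP; lra.
by apply: quatE.
Qed.

Definition qinv p :=
  Quat (qa p / qnorm p) (- qb p / qnorm p) (- qc p / qnorm p) (- qd p / qnorm p).

Lemma qnorm_neq0 p : p <> q0 R -> qnorm p != 0.
Proof. by move=> h; apply/eqP => /qnorm_eq0. Qed.

Lemma qmulV p : p <> q0 R -> qmul p (qinv p) = q1 R.
Proof.
move=> /qnorm_neq0; rewrite /qnorm => h.
apply: quatE; rewrite /= /qnorm; field; exact: h.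
Qed.
Lemma qmulVl p : p <> q0 R -> qmul (qinv p) p = q1 R.
Proof.
move=> /qnorm_neq0; rewrite /qnorm => h.
apply: quatE; rewrite /= /qnorm; field; exact: h.
Qed.

Lemma qcancel y p q : y <> q0 R -> qmul y p = qmul y q -> p = q.
Proof.
move=> hy h.
by rewrite -(qmul1l p) -(qmul1l q) -(qmulVl hy) -!qmulA h.
Qed.

Lemma qmul_star_eq0 a : qmul a (qstar a) = q0 R -> a = q0 R.
Proof.
move=> h; apply: qnorm_eq0.
have e : qnorm a ^+ 2 = qa (qmul a (qstar a)) ^+ 2 + qb (qmul a (qstar a)) ^+ 2
   + qc (qmul a (qstar a)) ^+ 2 + qd (qmul a (qstar a)) ^+ 2 by rewrite /qnorm /=; ring.
by move: e; rewrite h /= expr0n /= !addr0 => /eqP; rewrite sqrf_eq0 => /eqP.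
Qed.

Lemma qsq_eq0 x : qmul x x = q0 R -> x = q0 R.
Proof.
move=> h; case: (boolP (qnorm x == 0)) => [/eqP/qnorm_eq0 //|hn].
have hx : x <> q0 R by move=> e; move: hn; rewrite e /qnorm /= expr0n /= !addr0 eqxx.
by rewrite -(qmul1l x) -(qmulVl hx) -qmulA h; apply: quatE => /=; ring.
Qed.

Definition qk : quat R := Quat 0 0 0 1.
Lemma qd_conjV p v : qd (qmul (qmul p v) (qstar p)) = qd v * qd (qmul (qmul p qk) (qstar p)).
Proof. rewrite /=; ring. Qed.


Implicit Types M N G : mat2 R.
Lemma matE M N : m11 M = m11 N -> m12 M = m12 N -> m21 M = m21 N -> m22 M = m22 N -> M = N.
Proof. by case: M => ????; case: N => ???? /= -> -> -> ->. Qed.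

Ltac mring := apply: matE; apply: quatE => /=; ring.

Lemma mmulA M N G : mmul M (mmul N G) = mmul (mmul M N) G.
Proof. case: M => [[????][????][????][????]]; case: N => [[????][????][????][????]];
  case: G => [[????][????][????][????]]; apply: matE; apply: quatE => /=; ring. Qed.
Lemma mmul1l M : mmul (mone R) M = M.
Proof. case: M => [[????][????][????][????]]; apply: matE; apply: quatE => /=; ring. Qed.
Lemma mmul1r M : mmul M (mone R) = M.
Proof. case: M => [[????][????][????][????]]; apply: matE; apply: quatE => /=; ring. Qed.
Lemma mmulBr M N G : mmul M (msub N G) = msub (mmul M N) (mmul M G).
Proof. case: M => [[????][????][????][????]]; case: N => [[????][????][????][????]];
  case: G => [[????][????][????][????]]; apply: matE; apply: quatE => /=; ring. Qed.
Lemma mmulBl M N G : mmul (msub N G) M = msub (mmul N M) (mmul G M).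
Proof. case: M => [[????][????][????][????]]; case: N => [[????][????][????][????]];
  case: G => [[????][????][????][????]]; apply: matE; apply: quatE => /=; ring. Qed.
Lemma mmul0r M : mmul M (mzero R) = mzero R.
Proof. case: M => [[????][????][????][????]]; apply: matE; apply: quatE => /=; ring. Qed.

Definition mtil G := Mat2 (qstar (m22 G)) (qopp (qstar (m12 G)))
                          (qopp (qstar (m21 G))) (qstar (m11 G)).

Definition SLcomp (G : mat2 R) : Prop :=
  let a := m11 G in let b := m12 G in let c := m21 G in let d := m22 G in
  let e1 := qsub (qmul a (qstar d)) (qmul b (qstar c)) in
  let e2 := qsub (qmul d (qstar a)) (qmul c (qstar b)) in
  let e3 := qsub (qmul (qstar d) a) (qmul (qstar b) c) in
  let e4 := qsub (qmul (qstar a) d) (qmul (qstar c) b) in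
  [/\ [/\ qd (qmul a (qstar b)) = 0, qd (qmul c (qstar d)) = 0, qd (qmul (qstar c) a) = 0,
        qd (qmul (qstar d) b) = 0 & qd (qmul b (qstar a)) = 0],
      [/\ qd (qmul d (qstar c)) = 0, qd (qmul (qstar a) c) = 0 & qd (qmul (qstar b) d) = 0],
      [/\ qa e1 = 1, qb e1 = 0, qc e1 = 0 & qd e1 = 0],
      [/\ qa e2 = 1, qb e2 = 0, qc e2 = 0 & qd e2 = 0] &
      [/\ qa e3 = 1, qb e3 = 0, qc e3 = 0 & qd e3 = 0] /\
      [/\ qa e4 = 1, qb e4 = 0, qc e4 = 0 & qd e4 = 0]].

Lemma SLcompP G : inSL2V G -> SLcomp G.
Proof.
rewrite /inSL2V /SLcomp /inV.
move=> [[h1 [h2 [h3 [h4 [h5 [h6 [h7 h8]]]]]]] [e1 [e2 [e3 e4]]]].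
by rewrite e1 e2 e3 e4.
Qed.

Lemma SLcomp_inSL G : SLcomp G -> inSL2V G.
Proof.
rewrite /inSL2V /SLcomp /inV.
move=> [[h1 h2 h3 h4 h5] [h6 h7 h8] [f1 f2 f3 f4] [g1 g2 g3 g4] [[k1 k2 k3 k4] [l1 l2 l3 l4]]].
split; first by do !split.
by do !split; apply: quatE.
Qed.

Lemma mtil_l G : inSL2V G -> mmul (mtil G) G = mone R.
Proof.
move/SLcompP; case: G => [[a0 a1 a2 a3][b0 b1 b2 b3][c0 c1 c2 c3][d0 d1 d2 d3]].
rewrite /SLcomp /=.
move=> [[h1 h2 h3 h4 h5] [h6 h7 h8] [f1 f2 f3 f4] [g1 g2 g3 g4] [[k1 k2 k3 k4] [l1 l2 l3 l4]]].
apply: matE; apply: quatE => /=; lra.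
Qed.

Lemma mtil_r G : inSL2V G -> mmul G (mtil G) = mone R.
Proof.
move/SLcompP; case: G => [[a0 a1 a2 a3][b0 b1 b2 b3][c0 c1 c2 c3][d0 d1 d2 d3]].
rewrite /SLcomp /=.
move=> [[h1 h2 h3 h4 h5] [h6 h7 h8] [f1 f2 f3 f4] [g1 g2 g3 g4] [[k1 k2 k3 k4] [l1 l2 l3 l4]]].
apply: matE; apply: quatE => /=; lra.
Qed.

Definition formula a c := Mat2 (qsub (q1 R) (qmul a (qstar c))) (qmul a (qstar a))
              (qopp (qmul c (qstar c))) (qadd (q1 R) (qmul c (qstar a))).

Lemma conj_formula G : inSL2V G -> mmul (mmul G (P0 R)) (mtil G) = formula (m11 G) (m21 G).
Proof.
move/SLcompP; case: G => [[a0 a1 a2 a3][b0 b1 b2 b3][c0 c1 c2 c3][d0 d1 d2 d3]].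
rewrite /SLcomp /=.
move=> [[h1 h2 h3 h4 h5] [h6 h7 h8] [f1 f2 f3 f4] [g1 g2 g3 g4] [[k1 k2 k3 k4] [l1 l2 l3 l4]]].
apply: matE; apply: quatE => /=; lra.
Qed.

Lemma SL_SH G : inSL2V G -> inSH (m11 G) (m21 G).
Proof.
move/SLcompP; case: G => [[a0 a1 a2 a3][b0 b1 b2 b3][c0 c1 c2 c3][d0 d1 d2 d3]].
rewrite /SLcomp /inSH /inV /=.
move=> [[h1 h2 h3 h4 h5] [h6 h7 h8] [f1 f2 f3 f4] [g1 g2 g3 g4] [[k1 k2 k3 k4] [l1 l2 l3 l4]]].
split; last by lra.
case=> e1 e2; move: f1; move: e1 e2; rewrite /q0 => -[-> -> -> ->] [-> -> -> ->] /=; lra.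
Qed.

End SL1.
Section SL2.
Variable R : realType.
Implicit Types p q r a c x y z v : quat R.

Lemma hopf v : qd v = 0 -> exists a, qmul a (qstar a) = v.
Proof.
case: v => v0 v1 v2 v3 /= ->.
pose r := Num.sqrt (v0 ^+ 2 + v1 ^+ 2 + v2 ^+ 2).
have hr2 : r ^+ 2 = v0 ^+ 2 + v1 ^+ 2 + v2 ^+ 2.
  by rewrite sqr_sqrtr //; have := sqr_ge0 v0; have := sqr_ge0 v1; have := sqr_ge0 v2; lra.
have hr0 : 0 <= r by rewrite sqrtr_ge0.
have h1 := sqr_ge0 v1; have h2 := sqr_ge0 v2.
have hrv : 0 <= r + v0 by nra.
case: (boolP (r + v0 == 0)) => [/eqP hz | hnz].
  have e1 : v1 = 0 by apply/eqP; rewrite -sqrf_eq0; apply/eqP; nra.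
  have e2 : v2 = 0 by apply/eqP; rewrite -sqrf_eq0; apply/eqP; nra.
  exists (Quat 0 (Num.sqrt (- v0)) 0 0).
  have hs : Num.sqrt (- v0) ^+ 2 = - v0 by rewrite sqr_sqrtr //; lra.
  apply: quatE => /=; rewrite ?e1 ?e2; nra.
have hp : 0 < r + v0 by rewrite lt_def hnz hrv.
pose s := Num.sqrt ((r + v0) / 2).
have hs2 : s ^+ 2 = (r + v0) / 2 by rewrite sqr_sqrtr //; lra.
have hs0 : s != 0 by apply/eqP => e; move: hs2; rewrite e; lra.
exists (Quat s (v1 / (2 * s)) (v2 / (2 * s)) 0).
have hs4 : s ^+ 4 = ((r + v0) / 2) ^+ 2 by rewrite -hs2 -exprM.
apply: quatE => /=.
- transitivity ((4 * s ^+ 4 - v1 ^+ 2 - v2 ^+ 2) / (4 * s ^+ 2)).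
    by field.
  rewrite hs4 hs2.
  have h4 : (4 * ((r + v0) / 2) : R) != 0 by apply/eqP; lra.
  apply: (@mulIf _ (4 * ((r + v0) / 2))) => //; rewrite mulfVK //; nra.
- by field.
- by field.
- ring.
Qed.

End SL2.
Section SL3.
Variable R : realType.
Implicit Types p q r a c x y z v : quat R.

Lemma qnorm_ge0 p : 0 <= qnorm p.
Proof. rewrite /qnorm; have := sqr_ge0 (qa p); have := sqr_ge0 (qb p);
  have := sqr_ge0 (qc p); have := sqr_ge0 (qd p); lra. Qed.

Lemma f32 a c : inSH a c -> conj_SL2V (formula a c) (P0 R).
Proof.
move=> [hnz hE].
have hn : 0 < qnorm a + qnorm c.
  have := qnorm_ge0 a; have := qnorm_ge0 c.
  case: (boolP (qnorm a == 0)) => [/eqP /qnorm_eq0 ha0|h] h1 h2.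
    case: (boolP (qnorm c == 0)) => [/eqP /qnorm_eq0 hc0|h]; first by case: hnz.
    have : 0 < qnorm c by rewrite lt_def h h1.
    lra.
  have : 0 < qnorm a by rewrite lt_def h h2.
  lra.
have [t ht] : exists t, t * (qnorm a + qnorm c) = 1.
  by exists (qnorm a + qnorm c)^-1; rewrite mulVf //; apply/eqP; lra.
pose G := Mat2 a (Quat (-(t * qa c)) (t * qb c) (t * qc c) (-(t * qd c))) c
               (Quat (t * qa a) (-(t * qb a)) (-(t * qc a)) (t * qd a)).
have hG : inSL2V G.
  apply: SLcomp_inSL; move: ht hE; rewrite /SLcomp /G /inV /qnorm /=.
  move=> ht hE.
  have h1 := congr1 (fun u => t * u) hE; have h2 := congr1 (fun u => t * (t * u)) hE.
  move: h1 h2 => /= h1 h2.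
  by do !split; lra.
exists G, (mtil G); split.
- exact: hG.
- exact: mtil_r.
- exact: mtil_l.
- by rewrite conj_formula.
Qed.


Lemma qcomp p q : p = q -> [/\ qa p = qa q, qb p = qb q, qc p = qc q & qd p = qd q].
Proof. by move=> ->. Qed.

Lemma f31 a c : inSH a c ->
  formula a c <> mone R /\
  mmul (msub (formula a c) (mone R)) (msub (formula a c) (mone R)) = mzero R.
Proof.
move=> [hnz hE].
pose D := qsub (qmul (qstar c) a) (qmul (qstar a) c).
have hD : D = q0 R by move: hE; rewrite /inV => hE; apply: quatE; move: hE => /=; lra.
split.
  move=> e; have /= e2 := f_equal (@m12 R) e; have /= /qcomp [h1 h2 h3 h4] := f_equal (@m21 R) e.
  have ha := qmul_star_eq0 e2.
  apply: hnz; split => //; apply: qmul_star_eq0; apply: quatE; move: h1 h2 h3 h4 => /=; lra.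
have -> : mmul (msub (formula a c) (mone R)) (msub (formula a c) (mone R)) =
  Mat2 (qmul (qmul a D) (qstar c)) (qopp (qmul (qmul a D) (qstar a)))
       (qmul (qmul c D) (qstar c)) (qopp (qmul (qmul c D) (qstar a))).
  by apply: matE; apply: quatE; rewrite /= /D /=; ring.
by rewrite hD; apply: matE; apply: quatE => /=; ring.
Qed.

Lemma f23 A : conj_SL2V A (P0 R) -> exists a c, inSH a c /\ A = formula a c.
Proof.
case=> G [Gi [hG hGGi hGiG ->]].
have -> : Gi = mtil G.
  by rewrite -[Gi]mmul1l -(mtil_l hG) -mmulA hGGi mmul1r.
exists (m11 G), (m21 G); split; first exact: SL_SH.
exact: conj_formula.
Qed.


Lemma qstar1 : qstar (q1 R) = q1 R.
Proof. by apply: quatE => /=; rewrite ?oppr0. Qed.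

Lemma f13 A : inSL2V A -> A <> mone R ->
  mmul (msub A (mone R)) (msub A (mone R)) = mzero R ->
  exists a c, inSH a c /\ A = formula a c.
Proof.
move=> hA hne hN2.
have hT := mtil_l hA.
have h0 : msub (msub A (mone R)) (msub (mone R) (mtil A)) = mzero R.
  have hTN : mmul (mtil A) (msub A (mone R)) = msub (mone R) (mtil A)
    by rewrite mmulBr hT mmul1r.
  have : mmul (msub (mone R) (mtil A)) (msub A (mone R)) = mzero R
    by rewrite -hTN -mmulA hN2 mmul0r.
  by rewrite mmulBl mmul1l hTN.
have hS := SLcompP hA.
clear hT; case: A hA hne hN2 h0 hS => a b c d hA hne hN2 h0 hS.
pose x := qsub a (q1 R); pose w := qsub d (q1 R).
have hNe : msub (Mat2 a b c d) (mone R) = Mat2 x b c w.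
  by apply: matE; apply: quatE; rewrite /x /w /=; ring.
rewrite hNe in hN2 h0.
have /= n11 := f_equal (@m11 R) hN2.
have /= n12 := f_equal (@m12 R) hN2.
have /= /qcomp [e121 e122 e123 e124] := f_equal (@m12 R) h0.
have /= /qcomp [e211 e212 e213 e214] := f_equal (@m21 R) h0.
have /= /qcomp [e221 e222 e223 e224] := f_equal (@m22 R) h0.
have Fw : w = qopp (qstar x).
  by apply: quatE; move: e221 e222 e223 e224; rewrite /x /w /=; lra.
have Fb : qd b = 0 by move: e124 => /=; lra.
have Fc : qd c = 0 by move: e214 => /=; lra.
have Q1 : qmul x b = qmul b (qstar x).
  by rewrite Fw qmulNr in n12; apply: quatE; move: (qcomp n12) => /= [? ? ? ?]; lra.
have Q2 : qmul x x = qopp (qmul b c).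
  by apply: quatE; move: (qcomp n11) => /= [? ? ? ?]; lra.
have Q3 : qd (qmul x b) = 0.
  case: hS => [[h1 _ _ _ _] _ _ _ _]; move: h1; rewrite /x /= Fb => h1.
  lra.
case: (boolP (qnorm b == 0)) => [/eqP /qnorm_eq0 hb | hbn].
  have hx0 : x = q0 R.
    by apply: qsq_eq0; rewrite Q2 hb; apply: quatE => /=; ring.
  have hw0 : w = q0 R by rewrite Fw hx0; apply: quatE => /=; ring.
  have [c' hc'] : exists c', qmul c' (qstar c') = qopp c.
    by apply: hopf; rewrite /= Fc oppr0.
  move: (qcomp hx0) (qcomp hw0) => /= [x1 x2 x3 x4] [w1 w2 w3 w4].
  exists (q0 R), c'; split.
    split; last by rewrite /inV /=; ring.
    case=> _ hc0; apply: hne.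
    move: hc'; rewrite hc0 => /qcomp /= [c1 c2 c3 c4].
    apply: matE; rewrite ?hb; apply: quatE => /=; lra.
  apply: matE => /=.
  - apply: quatE => /=; lra.
  - by rewrite hb; apply: quatE => /=; ring.
  - by rewrite hc'; apply: quatE => /=; ring.
  - apply: quatE => /=; lra.
have hbnz : b <> q0 R by move=> e; move: hbn; rewrite e /qnorm /= expr0n /= !addr0 eqxx.
have [a' ha'] := hopf Fb.
have ha0 : a' <> q0 R.
  by move=> e; apply: hbnz; rewrite -ha' e; apply: quatE => /=; ring.
pose p := qinv a'.
have e1 : qmul (qstar a') (qstar p) = q1 R by rewrite -qstar_mul qmulVl // qstar1.
pose c' := qopp (qmul (qstar x) (qstar p)).
have hcs : qstar c' = qopp (qmul p x) by rewrite /c' qstarN qstar_mul !qstarK.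
have hac : qmul a' (qstar c') = qopp x by rewrite hcs qmulNr qmulA qmulV // qmul1l.
have hca : qmul c' (qstar a') = qopp (qstar x).
  by have := congr1 (@qstar R) hac; rewrite qstar_mul qstarK qstarN.
have hcc : qmul c' (qstar c') = qopp c.
  apply: (qcancel hbnz).
  have -> : qmul b (qopp c) = qmul x x by rewrite Q2; apply: quatE => /=; ring.
  rewrite hcs /c' !(qmulNl, qmulNr) qoppK.
  rewrite !qmulA -Q1 -ha' !qmulA.
  rewrite -(qmulA (qmul x a') (qstar a') (qstar p)) e1 qmul1r.
  by rewrite -(qmulA x a' p) qmulV // qmul1r.
exists a', c'; split.
  split; first by case.
  rewrite /inV.
  have -> : qd (qmul a' (qconj c')) = qd (qmul (qstar c') a') by rewrite /=; ring.
  have -> : qmul (qstar c') a' = qopp (qmul (qmul p (qmul x b)) (qstar p)).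
    rewrite hcs qmulNl; congr qopp.
    rewrite -ha' !qmulA -(qmulA (qmul (qmul p x) a') (qstar a') (qstar p)) e1.
    by rewrite qmul1r.
  by change (- qd (qmul (qmul p (qmul x b)) (qstar p)) = 0); rewrite qd_conjV Q3 mul0r oppr0.
apply: matE => /=.
- by rewrite hac; apply: quatE; rewrite /x /=; ring.
- by rewrite ha'.
- by rewrite hcc; apply: quatE => /=; ring.
- by rewrite hca -Fw; apply: quatE; rewrite /w /=; ring.
Qed.

End SL3.
End Helpers.
Import Helpers.

Theorem lemma3p22 (R : realType) (A : mat2 R) :
  inSL2V A ->
  ((A <> mone R /\ mmul (msub A (mone R)) (msub A (mone R)) = mzero R) <->
   conj_SL2V A (P0 R)) /\
  (conj_SL2V A (P0 R) <->
   exists a c : quat R, inSH a c /\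
     A = Mat2 (qsub (q1 R) (qmul a (qstar c))) (qmul a (qstar a))
              (qopp (qmul c (qstar c))) (qadd (q1 R) (qmul c (qstar a)))).
Proof.
move=> hA; split; split.
- case=> hne hN2; have [a [c [hs ->]]] := f13 hA hne hN2; exact: f32.
- move/f23 => [a [c [hs ->]]]; exact: f31.
- exact: f23.
- by case=> a [c [hs ->]]; exact: f32.
Qed.
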